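(* Let $\mathrm{B}:2^{<\omega}\times 2^{<\omega}\to\mathbb{N}$ satisfy: (1) $\mathrm{B}(x|y)$ is upper semi-computable uniformly in $x,y$; (2) there is a constant $c$ such that $\mathrm{B}(x|y)\le |x|+c$ for all $x,y\in 2^{<\omega}$; (3) there is a constant $d$, independent of $y$, such that $|\{x : \mathrm{B}(x|y)\le n\}|\le d\cdot 2^n$ for all $y\in 2^{<\omega}$ and $n\in\mathbb{N}$; (4) there is a constant $e$ such that $\mathrm{B}(\langle x,y\rangle|y)\le \mathrm{B}(x|y)+e$ for all $x,y$; (5) for every partial computable function $f:2^{<\omega}\to 2^{<\omega}$ there is a constant $c_f$ such that $\mathrm{B}(f(x)|y)\le \mathrm{B}(x|y)+c_f$ for all $y$ and all $x$ in the domain of $f$. Then there is a constant $c'$ such that $|\mathrm{B}(x|y)-\mathrm{C}(x|y)|\le c'$ for all $x,y\in 2^{<\omega}$.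
   Context: $2^{<\omega}$ is the set of finite binary strings; $|x|$ is the length of $x$; $\langle\cdot,\cdot\rangle$ is a fixed computable pairing function on strings. For a machine $T$, the conditional complexity is $\mathrm{C}_T(x|y)=\min\{|z| : T(\langle z,y\rangle)=x\}$. Fix an optimal machine $\mathbb{U}$ (for every machine $T$ there is $c_T$ with $\mathrm{C}_{\mathbb{U}}(x|y)\le \mathrm{C}_T(x|y)+c_T$ for all $x,y$) and set $\mathrm{C}(x|y)=\mathrm{C}_{\mathbb{U}}(x|y)$. Upper semi-computable uniformly in $x,y$ means the predicate ''$\mathrm{B}(x|y)\le k$'' is computably enumerable uniformly in $x,y,k$. *)

(* Defs.v *)
(* World: plain MathComp (boot). Computability is modelled by mu-recursive
   functions on nat; finite binary strings are encoded by bijective base-2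
   numeration. *)
From mathcomp Require Import all_boot.
Set Implicit Arguments. Unset Strict Implicit. Unset Printing Implicit Defensive.

Notation str := (seq bool).

(* bijection 2^{<omega} -> nat (bijective base-2 numeration, little endian) *)
Fixpoint code (s : str) : nat :=
  match s with
  | [::] => 0
  | b :: s' => (code s').*2 + (if b then 2 else 1)
  end.

Definition spair (x y : str) : str := nseq (size x) true ++ false :: x ++ y.

Inductive rec : Type :=
| RZero : rec
| RSucc : rec
| RProj : nat -> rec
| RComp : rec -> seq rec -> rec
| RPrec : rec -> rec -> rec
| RMu   : rec -> rec.

Inductive eval : rec -> seq nat -> nat -> Prop :=
| evZero xs : eval RZero xs 0
| evSucc xs : eval RSucc xs (head 0 xs).+1
| evProj i xs : eval (RProj i) xs (nth 0 xs i)
| evComp f gs xs ys v :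
    evals gs xs ys -> eval f ys v -> eval (RComp f gs) xs v
| evPrec0 f g xs v : eval f xs v -> eval (RPrec f g) (0 :: xs) v
| evPrecS f g n xs r v :
    eval (RPrec f g) (n :: xs) r -> eval g (n :: r :: xs) v ->
    eval (RPrec f g) (n.+1 :: xs) v
| evMu f xs n :
    eval f (n :: xs) 0 ->
    (forall m, m < n -> exists v, v <> 0 /\ eval f (m :: xs) v) ->
    eval (RMu f) xs n
with evals : seq rec -> seq nat -> seq nat -> Prop :=
| evsNil xs : evals [::] xs [::]
| evsCons g gs xs v vs :
    eval g xs v -> evals gs xs vs -> evals (g :: gs) xs (v :: vs).

(* A machine / partial computable function 2^{<omega} -> 2^{<omega} is given
   by a program p; runs p x z  means  p(x) converges and equals z. *)
Definition runs (p : rec) (x z : str) : Prop := eval p [:: code x] (code z).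

Definition CT_is (T : rec) (x y : str) (k : nat) : Prop :=
  (exists z, runs T (spair z y) x /\ size z = k) /\
  (forall z, runs T (spair z y) x -> k <= size z).

Definition optimal (U : rec) : Prop :=
  forall T : rec, exists cT : nat, forall x y z,
    runs T (spair z y) x ->
    exists z', runs U (spair z' y) x /\ size z' <= size z + cT.

(* "B(x|y) <= k" is c.e. uniformly in x,y,k: it is the domain of a partial
   recursive function of (code x, code y, k). *)
Definition upper_semicomputable (B : str -> str -> nat) : Prop :=
  exists p : rec, forall x y k,
    B x y <= k <-> exists v, eval p [:: code x; code y; k] v.

(* Main.v *)
Require Import Defs.
From mathcomp Require Import all_boot zify.
From Stdlib Require Classical_Prop.
Set Implicit Arguments. Unset Strict Implicit. Unset Printing Implicit Defensive.

Definition A (i : nat) (l : seq nat) := nth 0 l i.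

Definition comp k (f : seq nat -> nat) :=
  exists q, forall xs, size xs = k -> eval q xs (f xs).

Lemma comp_ext k f g : comp k f -> (forall xs, size xs = k -> f xs = g xs) -> comp k g.
Proof. move=> [q Hq] E; exists q => xs s; rewrite -E //; exact: Hq. Qed.

Lemma comp_proj k i : comp k (A i).
Proof. exists (RProj i) => xs _; exact: evProj. Qed.

Lemma comp_zero k : comp k (fun _ => 0).
Proof. exists RZero => xs _; exact: evZero. Qed.

Lemma comp_succ k f : comp k f -> comp k (fun xs => (f xs).+1).
Proof.
move=> [q Hq]; exists (RComp RSucc [:: q]) => xs s.
econstructor; first by econstructor; [exact: Hq | constructor].
exact: (evSucc [:: f xs]).
Qed.

Lemma comp_progs k (fs : seq (seq nat -> nat)) :
  (forall i, i < size fs -> comp k (nth (fun _ => 0) fs i)) ->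
  exists qs, forall xs, size xs = k -> evals qs xs (map (fun g => g xs) fs).
Proof.
elim: fs => [|f fs IH] H; first by exists [::] => xs _; constructor.
have [q Hq] := H 0 isT.
have [qs Hqs] : exists qs, forall xs, size xs = k -> evals qs xs (map (fun g => g xs) fs).
  by apply: IH => i Hi; exact: (H i.+1).
by exists (q :: qs) => xs s; constructor; [exact: Hq | exact: Hqs].
Qed.

Lemma comp_app k fs f : comp (size fs) f ->
  (forall i, i < size fs -> comp k (nth (fun _ => 0) fs i)) ->
  comp k (fun xs => f (map (fun g => g xs) fs)).
Proof.
move=> [q Hq] H; have [qs Hqs] := comp_progs H.
exists (RComp q qs) => xs s; econstructor; first exact: Hqs.
by apply: Hq; rewrite size_map.
Qed.

Lemma comp_perm k idx f : comp (size idx) f ->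
  comp k (fun l => f (map (fun i => A i l) idx)).
Proof.
move=> H; have := @comp_app k (map A idx) f.
rewrite size_map => /(_ H) H2.
apply: comp_ext.
  apply: H2 => i Hi; rewrite (nth_map 0) //; exact: comp_proj.
by move=> xs _ /=; rewrite -map_comp.
Qed.

Lemma map_A_iota k xs : size xs = k -> map (fun i => A i xs) (iota 0 k) = xs.
Proof.
move=> s; apply: (@eq_from_nth _ 0); first by rewrite size_map size_iota.
move=> i; rewrite size_map size_iota => Hi.
by rewrite (nth_map 0) ?size_iota // nth_iota.
Qed.

Lemma lift1 k h f : comp 1 (fun l => h (A 0 l)) -> comp k f -> comp k (fun xs => h (f xs)).
Proof.
move=> Hh Hf; apply: comp_ext; first apply: (@comp_app k [:: f] (fun l => h (A 0 l))) => //.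
  by case=> //.
by [].
Qed.

Lemma lift2 k h f g : comp 2 (fun l => h (A 0 l) (A 1 l)) -> comp k f -> comp k g ->
  comp k (fun xs => h (f xs) (g xs)).
Proof.
move=> Hh Hf Hg; apply: comp_ext; first apply: (@comp_app k [:: f; g] (fun l => h (A 0 l) (A 1 l))) => //.
  by case=> [|[|]].
by [].
Qed.

Lemma lift3 k h f g r : comp 3 (fun l => h (A 0 l) (A 1 l) (A 2 l)) -> comp k f -> comp k g -> comp k r ->
  comp k (fun xs => h (f xs) (g xs) (r xs)).
Proof.
move=> Hh Hf Hg Hr; apply: comp_ext; first apply: (@comp_app k [:: f; g; r] (fun l => h (A 0 l) (A 1 l) (A 2 l))) => //.
  by case=> [|[|[|]]].
by [].
Qed.

Fixpoint primrec (f g : seq nat -> nat) n xs :=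
  match n with 0 => f xs | m.+1 => g (m :: primrec f g m xs :: xs) end.

Lemma comp_prec k f g : comp k f -> comp k.+2 g ->
  comp k.+1 (fun l => primrec f g (head 0 l) (behead l)).
Proof.
move=> [qf Hf] [qg Hg]; exists (RPrec qf qg) => [[|n xs]] //= [s].
elim: n => [|n IH] /=; first by constructor; exact: Hf.
by econstructor; [exact: IH | apply: Hg; rewrite /= s].
Qed.

Lemma comp_rec k f g c : comp k f -> comp k.+2 g -> comp k c ->
  comp k (fun xs => primrec f g (c xs) xs).
Proof.
move=> Hf Hg Hc.
apply: comp_ext; first apply: (@comp_app k (c :: map A (iota 0 k))
   (fun l => primrec f g (head 0 l) (behead l))).
- by rewrite /= size_map size_iota; exact: comp_prec.
- case=> [|i] //=; rewrite size_map size_iota => Hi.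
  by rewrite (nth_map 0) ?size_iota //; exact: comp_proj.
- by move=> xs s /=; rewrite -map_comp (map_A_iota s).
Qed.

Lemma comp_const k c : comp k (fun _ => c).
Proof. elim: c => [|c IH]; [exact: comp_zero | exact: comp_succ]. Qed.

Lemma comp_drop k j f : comp k f -> comp (j + k) (fun l => f (drop j l)).
Proof.
move=> H; apply: comp_ext; first apply: (@comp_perm (j + k) (iota j k) f); first by rewrite size_iota.
move=> xs s; congr f; apply: (@eq_from_nth _ 0); first by rewrite size_map size_iota size_drop s addKn.
move=> i; rewrite size_map size_iota => Hi.
by rewrite (nth_map 0) ?size_iota // nth_iota // nth_drop /A.
Qed.

Lemma comp_shift2 k P : comp k.+1 P -> comp k.+2 (fun l => P (A 0 l :: drop 2 l)).
Proof.
move=> H; apply: comp_ext; first (apply: (@comp_perm k.+2 (0 :: iota 2 k) P); by rewrite /= size_iota).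
move=> xs s /=; congr (P (_ :: _)); apply: (@eq_from_nth _ 0); first by rewrite size_map size_iota size_drop s !subSS subn0.
move=> i; rewrite size_map size_iota => Hi.
by rewrite (nth_map 0) ?size_iota // nth_iota // nth_drop /A.
Qed.

Lemma comp_dropk k j f : comp k f -> comp (j + k) (fun l => f (drop j l)).
Proof. exact: comp_drop. Qed.

Lemma add2 : comp 2 (fun l => A 0 l + A 1 l).
Proof.
have H : comp 2 (fun xs => primrec (A 0) (fun l => (A 1 l).+1) (A 1 xs) xs).
  by apply: comp_rec; [exact: comp_proj | apply: comp_succ; exact: comp_proj | exact: comp_proj].
apply: (comp_ext H) => xs _; elim: (A 1 xs) => [|n IH] /=; first by rewrite addn0.
by rewrite /A /= IH addnS.
Qed.

Lemma cadd k f g : comp k f -> comp k g -> comp k (fun xs => f xs + g xs).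
Proof. exact: lift2 add2. Qed.

Lemma mul2 : comp 2 (fun l => A 0 l * A 1 l).
Proof.
have H : comp 2 (fun xs => primrec (fun _ => 0) (fun l => A 1 l + A 3 l) (A 0 xs) xs).
  by apply: comp_rec; [exact: comp_zero | apply: cadd; exact: comp_proj | exact: comp_proj].
apply: (comp_ext H) => xs _; elim: (A 0 xs) => [|n IH] //=.
by rewrite /A /= IH mulSn addnC.
Qed.

Lemma cmul k f g : comp k f -> comp k g -> comp k (fun xs => f xs * g xs).
Proof. exact: lift2 mul2. Qed.

Lemma pred1 : comp 1 (fun l => (A 0 l).-1).
Proof.
have H : comp 1 (fun xs => primrec (fun _ => 0) (A 0) (A 0 xs) xs).
  by apply: comp_rec; [exact: comp_zero | exact: comp_proj | exact: comp_proj].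
by apply: (comp_ext H) => xs _; case: (A 0 xs).
Qed.

Lemma cpred k f : comp k f -> comp k (fun xs => (f xs).-1).
Proof. exact: lift1 pred1. Qed.

Lemma sub2 : comp 2 (fun l => A 0 l - A 1 l).
Proof.
have H : comp 2 (fun xs => primrec (A 0) (fun l => (A 1 l).-1) (A 1 xs) xs).
  by apply: comp_rec; [exact: comp_proj | apply: cpred; exact: comp_proj | exact: comp_proj].
apply: (comp_ext H) => xs _; elim: (A 1 xs) => [|n IH] /=; first by rewrite subn0.
by rewrite /A /= IH subnS.
Qed.

Lemma csub k f g : comp k f -> comp k g -> comp k (fun xs => f xs - g xs).
Proof. exact: lift2 sub2. Qed.

Lemma sgn1 : comp 1 (fun l => nat_of_bool (0 < A 0 l)).
Proof.
have H : comp 1 (fun xs => primrec (fun _ => 0) (fun _ => 1) (A 0 xs) xs).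
  by apply: comp_rec; [exact: comp_zero | exact: comp_const | exact: comp_proj].
by apply: (comp_ext H) => xs _; case: (A 0 xs).
Qed.

Lemma csgn k f : comp k f -> comp k (fun xs => nat_of_bool (0 < f xs)).
Proof. exact: (lift1 (h := fun n => nat_of_bool (0 < n)) sgn1). Qed.

Lemma cbool k (b : seq nat -> bool) f : comp k f -> (forall xs, size xs = k -> b xs = (0 < f xs)) ->
  comp k (fun xs => nat_of_bool (b xs)).
Proof. move=> H E; apply: (comp_ext (csgn H)) => xs s; by rewrite E. Qed.

Lemma clt k f g : comp k f -> comp k g -> comp k (fun xs => nat_of_bool (f xs < g xs)).
Proof. move=> Hf Hg; apply: cbool (csub Hg Hf) _ => xs _; by rewrite subn_gt0. Qed.

Lemma cle k f g : comp k f -> comp k g -> comp k (fun xs => nat_of_bool (f xs <= g xs)).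
Proof. move=> Hf Hg; apply: cbool (csub (comp_succ Hg) Hf) _ => xs _; by rewrite subn_gt0 ltnS. Qed.

Lemma cnot k (b : seq nat -> bool) : comp k (fun xs => nat_of_bool (b xs)) ->
  comp k (fun xs => nat_of_bool (~~ b xs)).
Proof. move=> H; apply: (comp_ext (csub (comp_const k 1) H)) => xs _; by case: (b xs). Qed.

Lemma cand k (b c : seq nat -> bool) : comp k (fun xs => nat_of_bool (b xs)) ->
  comp k (fun xs => nat_of_bool (c xs)) -> comp k (fun xs => nat_of_bool (b xs && c xs)).
Proof. move=> H1 H2; apply: (comp_ext (cmul H1 H2)) => xs _; by case: (b xs); case: (c xs). Qed.

Lemma ceq k f g : comp k f -> comp k g -> comp k (fun xs => nat_of_bool (f xs == g xs)).
Proof.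
move=> Hf Hg; apply: (comp_ext (cand (cle Hf Hg) (cle Hg Hf))) => xs _.
by rewrite eqn_leq.
Qed.

Lemma cif k (b : seq nat -> bool) f g : comp k (fun xs => nat_of_bool (b xs)) -> comp k f -> comp k g ->
  comp k (fun xs => if b xs then f xs else g xs).
Proof.
move=> Hb Hf Hg; apply: (comp_ext (cadd (cmul Hb Hf) (cmul (cnot Hb) Hg))) => xs _.
by case: (b xs) => /=; rewrite ?mul1n ?mul0n ?addn0.
Qed.

Lemma csum k P c : comp k.+1 P -> comp k c ->
  comp k (fun xs => \sum_(0 <= m < c xs) P (m :: xs)).
Proof.
move=> HP Hc.
have H : comp k (fun xs => primrec (fun _ => 0) (fun l => A 1 l + P (A 0 l :: drop 2 l)) (c xs) xs).
  apply: comp_rec => //; first exact: comp_zero.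
  by apply: cadd; [exact: comp_proj | exact: comp_shift2].
apply: (comp_ext H) => xs _; elim: (c xs) => [|n IH] /=; first by rewrite big_geq.
by rewrite big_nat_recr //= /A /= drop0 IH.
Qed.

Lemma find_iota_S (a : pred nat) n :
  find a (iota 0 n.+1) = if find a (iota 0 n) < n then find a (iota 0 n) else if a n then n else n.+1.
Proof.
rewrite -addn1 iotaD find_cat /= size_iota has_find size_iota.
case: ifP => // _; rewrite add0n; case: (a n); by rewrite ?addn0.
Qed.

Lemma cfind k P c : comp k.+1 P -> comp k c ->
  comp k (fun xs => find (fun m => P (m :: xs) != 0) (iota 0 (c xs))).
Proof.
move=> HP Hc.
have H : comp k (fun xs => primrec (fun _ => 0)
   (fun l => if A 1 l < A 0 l then A 1 l else if P (A 0 l :: drop 2 l) != 0 then A 0 l else (A 0 l).+1) (c xs) xs).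
  apply: comp_rec => //; first exact: comp_zero.
  apply: cif; first by apply: clt; exact: comp_proj.
    exact: comp_proj.
  apply: cif; last by apply: comp_succ; exact: comp_proj.
    by apply: cnot; apply: ceq; [exact: comp_shift2 | exact: comp_zero].
  exact: comp_proj.
apply: (comp_ext H) => xs _; elim: (c xs) => [|n IH]; first by [].
by rewrite find_iota_S -IH /= /A /= drop0.
Qed.

Lemma pow2_1 : comp 1 (fun l => 2 ^ A 0 l).
Proof.
have H : comp 1 (fun xs => primrec (fun _ => 1) (fun l => A 1 l * 2) (A 0 xs) xs).
  apply: comp_rec; [exact: comp_const | apply: cmul; [exact: comp_proj| exact: comp_const] | exact: comp_proj].
apply: (comp_ext H) => xs _; elim: (A 0 xs) => [|n IH] //=.
by rewrite /A /= IH expnS mulnC.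
Qed.

Lemma cpow2 k f : comp k f -> comp k (fun xs => 2 ^ f xs).
Proof. exact: (lift1 (h := fun n => 2 ^ n) pow2_1). Qed.

Lemma odd1 : comp 1 (fun l => nat_of_bool (odd (A 0 l))).
Proof.
have H : comp 1 (fun xs => primrec (fun _ => 0) (fun l => 1 - A 1 l) (A 0 xs) xs).
  apply: comp_rec; [exact: comp_zero | apply: csub; [exact: comp_const| exact: comp_proj] | exact: comp_proj].
apply: (comp_ext H) => xs _; elim: (A 0 xs) => [|n IH] //=.
by rewrite /A /= IH; case: (odd n).
Qed.

Lemma codd k f : comp k f -> comp k (fun xs => nat_of_bool (odd (f xs))).
Proof. exact: (lift1 (h := fun n => nat_of_bool (odd n)) odd1). Qed.

Lemma half1 : comp 1 (fun l => (A 0 l)./2).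
Proof.
have H : comp 1 (fun xs => primrec (fun _ => 0) (fun l => A 1 l + nat_of_bool (odd (A 0 l))) (A 0 xs) xs).
  apply: comp_rec; [exact: comp_zero | apply: cadd; [exact: comp_proj| apply: codd; exact: comp_proj] | exact: comp_proj].
apply: (comp_ext H) => xs _; elim: (A 0 xs) => [|n IH] //=.
by rewrite /A /= IH uphalf_half addnC.
Qed.

Lemma chalf k f : comp k f -> comp k (fun xs => (f xs)./2).
Proof. exact: (lift1 (h := fun n => n./2) half1). Qed.

Lemma citer k h f c : comp 1 (fun l => h (A 0 l)) -> comp k f -> comp k c ->
  comp k (fun xs => iter (c xs) h (f xs)).
Proof.
move=> Hh Hf Hc.
have H : comp k (fun xs => primrec f (fun l => h (A 1 l)) (c xs) xs).
  by apply: comp_rec => //; apply: lift1 Hh _; exact: comp_proj.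
by apply: (comp_ext H) => xs _; elim: (c xs) => [|n IH] //=; rewrite /A /= IH.
Qed.

Fixpoint evalF (t : nat) (p : rec) (xs : seq nat) {struct p} : option nat :=
  match p with
  | RZero => Some 0
  | RSucc => Some (head 0 xs).+1
  | RProj i => Some (nth 0 xs i)
  | RComp f gs =>
      let fix evs (gs : seq rec) : option (seq nat) :=
        match gs with
        | [::] => Some [::]
        | g :: gs' => match evalF t g xs, evs gs' with
                      | Some v, Some vs => Some (v :: vs) | _, _ => None end
        end in
      match evs gs with Some vs => evalF t f vs | None => None end
  | RPrec f g =>
      match xs with
      | [::] => None
      | n :: xs' =>
        let fix pr (n : nat) : option nat :=
          match n with
          | 0 => evalF t f xs'
          | m.+1 => match pr m with Some r => evalF t g (m :: r :: xs') | None => None end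
          end in pr n
      end
  | RMu f =>
      let m := find (fun m => match evalF t f (m :: xs) with Some (S _) => false | _ => true end) (iota 0 t) in
      if (m < t) && (evalF t f (m :: xs) == Some 0) then Some m else None
  end.

Fixpoint evalsF t gs xs : option (seq nat) :=
  match gs with
  | [::] => Some [::]
  | g :: gs' => match evalF t g xs, evalsF t gs' xs with
                | Some v, Some vs => Some (v :: vs) | _, _ => None end
  end.

Lemma evalF_comp t f gs xs : evalF t (RComp f gs) xs =
  match evalsF t gs xs with Some vs => evalF t f vs | None => None end.
Proof.
rewrite /=; congr (match _ with Some vs => _ | None => _ end).
by elim: gs => //= g gs ->.
Qed.

Fixpoint precF t f g n xs' :=
  match n with
  | 0 => evalF t f xs'
  | m.+1 => match precF t f g m xs' with Some r => evalF t g (m :: r :: xs') | None => None end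
  end.

Lemma evalF_prec t f g n xs : evalF t (RPrec f g) (n :: xs) = precF t f g n xs.
Proof. by elim: n => //= n ->. Qed.

Inductive AllP (P : rec -> Prop) : seq rec -> Prop :=
| AllNil : AllP P [::]
| AllCons g gs : P g -> AllP P gs -> AllP P (g :: gs).

Section RecInd.
Variable P : rec -> Prop.
Hypothesis h0 : P RZero.
Hypothesis hS : P RSucc.
Hypothesis hP : forall i, P (RProj i).
Hypothesis hC : forall f gs, P f -> AllP P gs -> P (RComp f gs).
Hypothesis hR : forall f g, P f -> P g -> P (RPrec f g).
Hypothesis hM : forall f, P f -> P (RMu f).
Fixpoint rec_ind2 (p : rec) : P p :=
  match p with
  | RZero => h0
  | RSucc => hS
  | RProj i => hP i
  | RComp f gs => hC (rec_ind2 f)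
      ((fix F (gs : seq rec) : AllP P gs :=
         match gs with
         | [::] => AllNil P
         | g :: gs' => AllCons (rec_ind2 g) (F gs')
         end) gs)
  | RPrec f g => hR (rec_ind2 f) (rec_ind2 g)
  | RMu f => hM (rec_ind2 f)
  end.
End RecInd.

Lemma find_iota_eq (a : pred nat) n m : m < n -> a m -> (forall j, j < m -> ~~ a j) ->
  find a (iota 0 n) = m.
Proof.
move=> mn am bef.
have hs : has a (iota 0 n) by apply/hasP; exists m => //; rewrite mem_iota.
have := hs; rewrite has_find size_iota => fn.
have := nth_find 0 hs; rewrite nth_iota // add0n => af.
case: (ltngtP (find a (iota 0 n)) m) => // h.
  by have := bef _ h; rewrite af.
by have := before_find 0 h; rewrite nth_iota ?am // (ltn_trans h fn).
Qed.

Definition muP t f xs := (fun m => match evalF t f (m :: xs) with Some (S _) => false | _ => true end).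

Lemma evalF_mu t f xs : evalF t (RMu f) xs =
  let m := find (muP t f xs) (iota 0 t) in
  if (m < t) && (evalF t f (m :: xs) == Some 0) then Some m else None.
Proof. by []. Qed.

Lemma sound p : forall t xs v, evalF t p xs = Some v -> eval p xs v.
Proof.
elim/rec_ind2: p.
- by move=> t xs v [<-]; constructor.
- by move=> t xs v [<-]; constructor.
- by move=> i t xs v [<-]; constructor.
- move=> f gs IHf IHgs t xs v; rewrite evalF_comp.
  case E: (evalsF t gs xs) => [vs|] // /IHf Hf.
  econstructor; last exact: Hf.
  elim: IHgs vs E {Hf} => [|g gs' Hg _ IH] vs /=; first by move=> [<-]; constructor.
  case Eg: (evalF t g xs) => [w|] //; case Es: (evalsF t gs' xs) => [ws|] // [<-].
  by constructor; [exact: Hg Eg | exact: IH].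
- move=> f g IHf IHg t [|n xs] v //; rewrite evalF_prec.
  elim: n v => [|n IH] v /=; first by move/IHf; constructor.
  case E: (precF t f g n xs) => [r|] // /IHg H.
  by apply: evPrecS (IH _ E) H.
- move=> f IHf t xs v; rewrite evalF_mu /=.
  set m := find _ _; case: ifP => // /andP [mt /eqP E] [<-].
  constructor; first exact: IHf E.
  move=> j jm; have := before_find 0 jm; rewrite nth_iota ?(ltn_trans jm mt) // add0n /muP.
  case Ej: (evalF t f (j :: xs)) => [[|w]|] //= _.
  by exists w.+1; split => //; exact: IHf Ej.
Qed.

Lemma mono p : forall t t' xs v, t <= t' -> evalF t p xs = Some v -> evalF t' p xs = Some v.
Proof.
elim/rec_ind2: p => //.
- move=> f gs IHf IHgs t t' xs v tt'; rewrite !evalF_comp.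
  case E: (evalsF t gs xs) => [vs|] // /(IHf _ _ _ _ tt') H.
  suff -> : evalsF t' gs xs = Some vs by [].
  elim: IHgs vs E {H} => [|g gs' Hg _ IH] vs //=.
  case Eg: (evalF t g xs) => [w|] //; case Es: (evalsF t gs' xs) => [ws|] // [<-].
  by rewrite (Hg _ _ _ _ tt' Eg) (IH _ Es).
- move=> f g IHf IHg t t' [|n xs] v tt' //; rewrite !evalF_prec.
  elim: n v => [|n IH] v /=; first exact: IHf.
  case E: (precF t f g n xs) => [r|] //; rewrite (IH _ E); exact: IHg.
- move=> f IHf t t' xs v tt'; rewrite !evalF_mu /=.
  set m := find _ _; case: ifP => // /andP [mt /eqP E] [<-].
  have E' := IHf _ _ _ _ tt' E.
  have -> : find (muP t' f xs) (iota 0 t') = m.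
    apply: find_iota_eq; first exact: leq_trans mt tt'.
      by rewrite /muP E'.
    move=> j jm; have := before_find 0 jm; rewrite nth_iota ?(ltn_trans jm mt) // add0n /muP.
    by case Ej: (evalF t f (j :: xs)) => [[|w]|] //= _; rewrite (IHf _ _ _ _ tt' Ej).
  by rewrite (leq_trans mt tt') E' eqxx.
Qed.

Lemma monos gs : forall t t' xs vs, t <= t' -> evalsF t gs xs = Some vs -> evalsF t' gs xs = Some vs.
Proof.
elim: gs => [|g gs IH] t t' xs vs tt' //=.
case Eg: (evalF t g xs) => [w|] //; case Es: (evalsF t gs xs) => [ws|] // [<-].
by rewrite (mono tt' Eg) (IH _ _ _ _ tt' Es).
Qed.

Lemma unif_bound (Q : nat -> nat -> Prop) n :
  (forall m t t', t <= t' -> Q m t -> Q m t') ->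
  (forall m, m < n -> exists t, Q m t) -> exists T, forall m, m < n -> Q m T.
Proof.
move=> Qm; elim: n => [|n IH] H; first by exists 0.
have [T HT] := IH (fun m hm => H m (ltnW hm)).
have [t Ht] := H n (ltnSn n).
exists (maxn T t) => m; rewrite ltnS leq_eqVlt => /orP [/eqP -> | hm].
  by apply: Qm Ht; exact: leq_maxr.
by apply: Qm (HT m hm); exact: leq_maxl.
Qed.

Fixpoint complete p xs v (H : eval p xs v) {struct H} : exists t, evalF t p xs = Some v
with completes gs xs vs (H : evals gs xs vs) {struct H} : exists t, evalsF t gs xs = Some vs.
Proof.
- case: H => {p xs v}.
  + by move=> xs; exists 0.
  + by move=> xs; exists 0.
  + by move=> i xs; exists 0.
  + move=> f gs xs ys v Hs Hf.
    have [t1 H1] := completes _ _ _ Hs; have [t2 H2] := complete _ _ _ Hf.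
    exists (maxn t1 t2); rewrite evalF_comp (monos (leq_maxl t1 t2) H1).
    exact: mono (leq_maxr t1 t2) H2.
  + move=> f g xs v Hf; have [t H1] := complete _ _ _ Hf.
    by exists t; rewrite evalF_prec.
  + move=> f g n xs r v Hr Hg.
    have [t1 H1] := complete _ _ _ Hr; have [t2 H2] := complete _ _ _ Hg.
    exists (maxn t1 t2); rewrite evalF_prec /=.
    move: (mono (leq_maxl t1 t2) H1); rewrite evalF_prec => ->.
    exact: mono (leq_maxr t1 t2) H2.
  + move=> f xs n H0 Hlt.
    have [t0 Ht0] := complete _ _ _ H0.
    have IH : forall m, m < n -> exists t, exists w, w <> 0 /\ evalF t f (m :: xs) = Some w.
      move=> m hm; case: (Hlt m hm) => w [nz Hw].
      have [t Ht] := complete _ _ _ Hw.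
      by exists t, w.
    have [T HT] := unif_bound (Q := fun m t => exists w, w <> 0 /\ evalF t f (m :: xs) = Some w)
       (n := n) (fun m t t' tt' '(ex_intro w (conj nz E)) => ex_intro _ w (conj nz (mono tt' E))) IH.
    set t := maxn (maxn t0 T) n.+1.
    have h0 : t0 <= t by rewrite /t leq_max leq_max leqnn.
    have hT : T <= t by rewrite /t leq_max leq_max leqnn orbT.
    have hn : n < t by rewrite /t leq_max leqnn orbT.
    have E0 := mono h0 Ht0.
    exists t; rewrite evalF_mu /=.
    have -> : find (muP t f xs) (iota 0 t) = n.
      apply: find_iota_eq => //; first by rewrite /muP E0.
      move=> j jn; have [w [nz Ew]] := HT j jn.
      by rewrite /muP (mono hT Ew); case: w nz Ew.
    by rewrite hn E0 eqxx.
- case: H => {gs xs vs}.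
  + by move=> xs; exists 0.
  + move=> g gs xs v vs Hg Hs.
    have [t1 H1] := complete _ _ _ Hg; have [t2 H2] := completes _ _ _ Hs.
    exists (maxn t1 t2) => /=.
    by rewrite (mono (leq_maxl t1 t2) H1) (monos (leq_maxr t1 t2) H2).
Qed.

Definition enc (o : option nat) := if o is Some v then v.+1 else 0.

Lemma map_A_drop j k l : size l = j + k -> map (fun i => A i l) (iota j k) = drop j l.
Proof.
move=> s; apply: (@eq_from_nth _ 0); first by rewrite size_map size_iota size_drop s addKn.
move=> i; rewrite size_map size_iota => Hi.
by rewrite (nth_map 0) ?size_iota // nth_iota // nth_drop /A.
Qed.

Lemma AllP_nth P gs i : AllP P gs -> i < size gs -> P (nth RZero gs i).
Proof.
move=> H; elim: H i => [|g gs' Hg _ IH] [|i] //=; exact: IH.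
Qed.

Lemma evalsF_all t gs xs : evalsF t gs xs =
  if all (fun g => evalF t g xs != None) gs then Some (map (fun g => odflt 0 (evalF t g xs)) gs) else None.
Proof.
elim: gs => //= g gs ->; case: (evalF t g xs) => [v|] //=.
by case: (all _ _).
Qed.

Definition SIM p (l : seq nat) := enc (evalF (head 0 l) p (behead l)).

Lemma compile p : forall a, comp a.+1 (SIM p).
Proof.
rewrite /SIM; elim/rec_ind2: p.
- move=> a; apply: (comp_ext (comp_const _ 1)) => xs _ //.
- move=> a; apply: (comp_ext (comp_succ (comp_succ (comp_proj _ 1)))) => [[|t xs]] //.
- move=> i a; apply: (comp_ext (comp_succ (comp_proj _ i.+1))) => [[|t xs]] //.
- move=> f gs IHf IHgs a.
  set G := fun g (l : seq nat) => enc (evalF (head 0 l) g (behead l)).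
  have Hall : comp a.+1 (fun l => nat_of_bool (all (fun g => 0 < G g l) gs)).
    elim: IHgs {IHf} => [|g gs' Hg _ IH]; first exact: comp_const.
    by apply: cand => //; apply: csgn; exact: Hg.
  have HF : comp a.+1 (fun l => enc (evalF (head 0 (A 0 l :: map (fun g => (G g l).-1) gs)) f
                                   (behead (A 0 l :: map (fun g => (G g l).-1) gs)))).
    apply: (comp_ext (@comp_app a.+1 (A 0 :: map (fun g l => (G g l).-1) gs) _ _ _)).
    - by rewrite /= size_map; exact: IHf.
    - case=> [|i] /=; first by move=> _; exact: comp_proj.
      rewrite size_map => Hi; rewrite (nth_map RZero) //.
      by apply: cpred; exact: (AllP_nth IHgs Hi).
    - by move=> xs _ /=; rewrite -map_comp.
  apply: (comp_ext (cif Hall HF (comp_zero _))) => [[|t xs]] // _.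
  rewrite [behead _]/= [head _ _]/= evalF_comp evalsF_all /G /=.
  have -> : all (fun g => 0 < enc (evalF t g xs)) gs = all (fun g => evalF t g xs != None) gs.
    by apply: eq_all => g; case: (evalF t g xs).
  case: ifP => // Hal; rewrite /A /=.
  by congr (enc (evalF t f _)); apply: eq_map => g; case: (evalF t g xs).
- move=> f g IHf IHg [|a].
    by apply: (comp_ext (comp_zero _)) => [[|t [|]]].
  set F' := fun l : seq nat => enc (evalF (head 0 l) f (behead l)).
  set Gg := fun l : seq nat => enc (evalF (head 0 l) g (behead l)).
  set G' := fun l : seq nat => if 0 < A 1 l then Gg (A 2 l :: A 0 l :: (A 1 l).-1 :: drop 3 l) else 0.
  have HG' : comp a.+3 G'.
    apply: cif; first by apply: csgn; exact: comp_proj.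
      apply: (comp_ext (@comp_app a.+3 [:: A 2, A 0, (fun l => (A 1 l).-1) & map A (iota 3 a)] Gg _ _)).
      - by rewrite /= size_map size_iota; exact: IHg.
      - case=> [|[|[|i]]] /=; try (move=> _; exact: comp_proj).
          by move=> _; exact: (cpred (comp_proj _ 1)).
        rewrite size_map size_iota => Hi; rewrite (nth_map 0) ?size_iota //; exact: comp_proj.
      - by move=> l s /=; rewrite -map_comp (@map_A_drop 3 a l) // s.
    exact: comp_zero.
  have HH := comp_prec (IHf a) HG'.
  have HH' : comp (size (1 :: 0 :: iota 2 a)) (fun l => primrec F' G' (head 0 l) (behead l)).
    by rewrite /= size_iota.
  have H2 := @comp_perm a.+2 (1 :: 0 :: iota 2 a) _ HH'.
  apply: (comp_ext (H2)) => [[|t [|n xs]]] // [s].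
  rewrite [behead _]/= [head _ _]/= evalF_prec.
  rewrite (@map_A_drop 2 a [:: t, n & xs]) /A /=; last by rewrite s.
  rewrite drop0; elim: n => [|n IH] //.
  rewrite [primrec _ _ _ _]/= IH; unfold G'; rewrite /A /=.
  case: (precF t f g n xs) => [r|] //=.
  by rewrite /Gg /= drop0.
- move=> f IHf a.
  set F := fun l : seq nat => enc (evalF (head 0 l) f (behead l)).
  set P := fun l : seq nat => nat_of_bool (F (A 1 l :: A 0 l :: drop 2 l) < 2).
  have HP : comp a.+2 P.
    apply: clt; last exact: comp_const.
    apply: (comp_ext (@comp_perm a.+2 (1 :: 0 :: iota 2 a) F _)).
      by rewrite /= size_iota; exact: IHf.
    by move=> l s /=; rewrite (@map_A_drop 2 a l) // s.
  have HM := @cfind a.+1 P (A 0) HP (comp_proj _ 0).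
  set M := fun l => find _ _ in HM.
  have HFM : comp a.+1 (fun l => F (A 0 l :: M l :: drop 1 l)).
    apply: (comp_ext (@comp_app a.+1 [:: A 0, M & map A (iota 1 a)] F _ _)).
    - by rewrite /= size_map size_iota; exact: IHf.
    - case=> [|[|i]] /=; try (move=> _; first [exact: comp_proj | exact: HM]).
      rewrite size_map size_iota => Hi; rewrite (nth_map 0) ?size_iota //; exact: comp_proj.
    - by move=> l s /=; rewrite -map_comp (@map_A_drop 1 a l) // s.
  have HR := cif (cand (clt HM (comp_proj _ 0)) (ceq HFM (comp_const _ 1))) (comp_succ HM) (comp_zero _).
  apply: (comp_ext HR) => [[|t xs]] // _.
  rewrite [behead _]/= [head _ _]/= evalF_mu /=.
  have -> : find (muP t f xs) (iota 0 t) = M (t :: xs).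
    rewrite /M /A /=; apply: eq_find => m; rewrite /P /F /A /= drop0 /muP.
    by case: (evalF t f (m :: xs)) => [[|[|w]]|].
  rewrite /A /= drop0 /F /=.
  case: (M (t :: xs) < t) => //=.
  by case: (evalF t f (M (t :: xs) :: xs)) => [[|w]|].
Qed.

Lemma code_cat s1 s2 : code (s1 ++ s2) = code s1 + 2 ^ size s1 * code s2.
Proof.
elim: s1 => [|b s1 IH] /=; first by rewrite mul1n.
rewrite IH expnS; set a := 2 ^ size s1; lia.
Qed.

Lemma code_bounds s : 2 ^ size s <= (code s).+1 /\ (code s).+1 < 2 ^ (size s).+1.
Proof.
elim: s => [|b s [IH1 IH2]] //=.
rewrite !expnS; move: IH1 IH2; rewrite expnS; set a := 2 ^ size s.
case: b; lia.
Qed.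

Lemma size_le_code s : size s <= code s.
Proof. elim: s => [|b s IH] //=; case: b; lia. Qed.

Lemma size_from_code s L : 2 ^ L <= (code s).+1 -> (code s).+1 < 2 ^ L.+1 -> size s = L.
Proof.
have [h1 h2] := code_bounds s => hL1 hL2.
case: (ltngtP (size s) L) => // h.
  have : 2 ^ (size s).+1 <= 2 ^ L by rewrite leq_exp2l.
  lia.
have : 2 ^ L.+1 <= 2 ^ size s by rewrite leq_exp2l.
lia.
Qed.

Definition tl (n : nat) := (n.-1)./2.
Definition isT (n : nat) := (0 < n) && ~~ odd n.

Lemma tl_cons b s : tl (code (b :: s)) = code s.
Proof.
rewrite /tl /=; case: b.
  by rewrite addn2 /= uphalf_double.
by rewrite addn1 /= doubleK.
Qed.

Lemma isT_cons b s : isT (code (b :: s)) = b.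
Proof. by rewrite /isT /=; case: b; rewrite ?addn2 ?addn1 /= ?odd_double. Qed.

Lemma iter_tl k s : iter k tl (code s) = code (drop k s).
Proof.
elim: k s => [|k IH] s; first by rewrite drop0.
rewrite iterSr; case: s => [|b s] /=.
  by elim: k {IH} => //= k ->.
by rewrite tl_cons IH.
Qed.

Lemma isT_drop k s : isT (code (drop k s)) = nth false s k.
Proof.
elim: k s => [|k IH] [|b s] //=; first by rewrite isT_cons.
Qed.

Lemma tl_digit n : 0 < n -> n = (tl n).*2 + (if odd n then 1 else 2).
Proof.
case: n => // m _; rewrite /tl /= -{1}(odd_double_half m); case: (odd m) => /=; lia.
Qed.

Fixpoint dec (f n : nat) : seq bool :=
  match f with
  | 0 => [::]
  | f'.+1 => if n is 0 then [::] else (~~ odd n) :: dec f' (tl n)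
  end.

Lemma code_dec f n : n <= f -> code (dec f n) = n.
Proof.
elim: f n => [|f IH] [|n] //= h.
have Hn := tl_digit (ltn0Sn n).
rewrite IH; last first.
  rewrite /tl /= leq_half_double; lia.
move: Hn; rewrite /= negbK; case: (odd n) => /= Hn; lia.
Qed.

Definition dc n := dec n n.
Lemma code_dc n : code (dc n) = n.
Proof. exact: code_dec. Qed.

Section Decode.
Variable D : nat.

Definition Lfun w := find (fun k => ~~ isT (iter k tl w)) (iota 0 w).
Definition ycode w := iter (Lfun w + Lfun w).+1 tl w.
Definition zcode w := iter (Lfun w).+1 tl w - 2 ^ Lfun w * ycode w.
Definition nfun w := Lfun w - D.
Definition ifun w := zcode w - (2 ^ Lfun w).-1.

Lemma Lfun_spair z y : Lfun (code (spair z y)) = size z.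
Proof.
rewrite /Lfun; apply: find_iota_eq.
- have := size_le_code (spair z y); rewrite /spair size_cat size_nseq /=; lia.
- by rewrite iter_tl isT_drop /spair nth_cat size_nseq ltnn subnn.
- move=> j jz; rewrite iter_tl isT_drop /spair nth_cat size_nseq jz nth_nseq jz //.
Qed.

Lemma ycode_spair z y : ycode (code (spair z y)) = code y.
Proof.
rewrite /ycode Lfun_spair iter_tl /spair drop_cat size_nseq.
have -> : (size z + size z).+1 < size z = false by lia.
have -> : (size z + size z).+1 - size z = (size z).+1 by lia.
by rewrite /= drop_size_cat.
Qed.

Lemma zcode_spair z y : zcode (code (spair z y)) = code z.
Proof.
rewrite /zcode ycode_spair Lfun_spair iter_tl /spair drop_cat size_nseq ltnNge leqnSn /=.
rewrite subSn // subnn /= drop0 code_cat; lia.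
Qed.
End Decode.

Lemma ctl k f : comp k f -> comp k (fun xs => tl (f xs)).
Proof. move=> H; exact: chalf (cpred H). Qed.

Lemma cisT k f : comp k f -> comp k (fun xs => nat_of_bool (isT (f xs))).
Proof. move=> H; apply: cand (csgn H) (cnot (codd H)). Qed.

Lemma tl1 : comp 1 (fun l => tl (A 0 l)).
Proof. exact: ctl (comp_proj _ 0). Qed.

Lemma citer_tl k f c : comp k f -> comp k c -> comp k (fun xs => iter (c xs) tl (f xs)).
Proof. move=> Hf Hc; exact: (citer (h := tl) tl1 Hf Hc). Qed.

Lemma bool_neq0 (b : bool) : (nat_of_bool b != 0) = b.
Proof. by case: b. Qed.

Lemma cLfun k f : comp k f -> comp k (fun xs => Lfun (f xs)).
Proof.
move=> Hf.
have H1 : comp 1 (fun l => Lfun (A 0 l)).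
  have HP : comp 2 (fun l => nat_of_bool (~~ isT (iter (A 0 l) tl (A 1 l)))).
    by apply: cnot; apply: cisT; apply: citer_tl; exact: comp_proj.
  apply: (comp_ext (cfind HP (comp_proj _ 0))) => xs _.
  by rewrite /Lfun; apply: eq_find => m; rewrite bool_neq0.
exact: (lift1 (h := Lfun) H1 Hf).
Qed.

Lemma cycode k f : comp k f -> comp k (fun xs => ycode (f xs)).
Proof.
move=> Hf; rewrite /ycode; apply: citer_tl => //.
by apply: comp_succ; apply: cadd; exact: cLfun.
Qed.

Lemma czcode k f : comp k f -> comp k (fun xs => zcode (f xs)).
Proof.
move=> Hf; rewrite /zcode; apply: csub.
  by apply: citer_tl => //; apply: comp_succ; exact: cLfun.
by apply: cmul; [apply: cpow2; exact: cLfun | exact: cycode].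
Qed.

Lemma cnfun D k f : comp k f -> comp k (fun xs => nfun D (f xs)).
Proof. move=> Hf; rewrite /nfun; apply: csub; [exact: cLfun | exact: comp_const]. Qed.

Lemma cifun k f : comp k f -> comp k (fun xs => ifun (f xs)).
Proof.
move=> Hf; rewrite /ifun; apply: csub; first exact: czcode.
by apply: cpred; apply: cpow2; exact: cLfun.
Qed.

Lemma sum_count (P : pred nat) n : \sum_(0 <= m < n) P m = count P (iota 0 n).
Proof.
elim: n => [|n IH]; first by rewrite big_geq.
by rewrite big_nat_recr // IH -[n.+1]addn1 iotaD count_cat /= add0n addn0.
Qed.

Section Machine.
Variable p : rec.
Variable D : nat.

Definition memb x t w := (x < t) && (evalF t p [:: x; ycode w; nfun D w] != None).
Definition cnt t w := \sum_(0 <= x < t) memb x t w.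
Definition newb x t w := memb x t w && ~~ memb x t.-1 w.
Definition rank x t w := cnt t.-1 w + \sum_(0 <= x' < x) newb x' t w.
Definition goodx t w := find (fun x => newb x t w && (rank x t w == ifun w)) (iota 0 t).
Definition testf t w := if goodx t w < t then 0 else 1.

Lemma cmemb : comp 3 (fun l => memb (A 0 l) (A 1 l) (A 2 l)).
Proof.
apply: cand; first by apply: clt; exact: comp_proj.
have H : comp 3 (fun l => SIM p (map (fun g => g l)
      [:: A 1; A 0; fun l => ycode (A 2 l); fun l => nfun D (A 2 l)])).
  apply: comp_app; first exact: compile.
  case=> [|[|[|[|i]]]] //= _; try exact: comp_proj.
    exact: (cycode (comp_proj _ 2)).
  exact: (cnfun D (comp_proj _ 2)).
apply: (comp_ext (csgn H)) => l _; rewrite /SIM /=.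
by case: (evalF _ _ _).
Qed.

Lemma ccnt : comp 2 (fun l => cnt (A 0 l) (A 1 l)).
Proof.
have := @csum 2 (fun l => memb (A 0 l) (A 1 l) (A 2 l)) (A 0) cmemb (comp_proj _ 0).
by move=> H; apply: (comp_ext H).
Qed.

Lemma cnewb : comp 3 (fun l => newb (A 0 l) (A 1 l) (A 2 l)).
Proof.
apply: cand; first exact: cmemb.
apply: cnot.
have := @comp_app 3 [:: A 0; fun l => (A 1 l).-1; A 2] _ cmemb.
move=> H; apply: (comp_ext (H _)) => //.
case=> [|[|[|i]]] //= _; try exact: comp_proj.
exact: (cpred (comp_proj _ 1)).
Qed.

Lemma crank : comp 3 (fun l => rank (A 0 l) (A 1 l) (A 2 l)).
Proof.
apply: cadd.
  have := @comp_app 3 [:: fun l => (A 1 l).-1; A 2] _ ccnt.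
  move=> H; apply: (comp_ext (H _)) => //.
  case=> [|[|i]] //= _; try exact: comp_proj.
  exact: (cpred (comp_proj _ 1)).
have HP : comp 4 (fun l => newb (A 0 l) (A 2 l) (A 3 l)).
  have := @comp_perm 4 [:: 0; 2; 3] _ cnewb.
  by move=> H; apply: (comp_ext H).
by have := @csum 3 _ (A 0) HP (comp_proj _ 0); move=> H; apply: (comp_ext H).
Qed.

Lemma cgoodx : comp 2 (fun l => goodx (A 0 l) (A 1 l)).
Proof.
have HP : comp 3 (fun l => nat_of_bool (newb (A 0 l) (A 1 l) (A 2 l) && (rank (A 0 l) (A 1 l) (A 2 l) == ifun (A 2 l)))).
  apply: cand; first exact: cnewb.
  by apply: ceq; [exact: crank | apply: cifun; exact: comp_proj].
apply: (comp_ext (cfind HP (comp_proj _ 0))) => l _.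
by rewrite /goodx; apply: eq_find => m; rewrite bool_neq0.
Qed.

Lemma ctestf : comp 2 (fun l => testf (A 0 l) (A 1 l)).
Proof.
apply: (comp_ext (cif (clt cgoodx (comp_proj _ 0)) (comp_const _ 0) (comp_const _ 1))) => l _.
by [].
Qed.

End Machine.

Lemma sum_le_bound (F : nat -> nat) a b : a <= b ->
  \sum_(0 <= i < a) F i <= \sum_(0 <= i < b) F i.
Proof. move=> ab; rewrite (@big_cat_nat _ _ _ a 0 b) //=; exact: leq_addr. Qed.

Section Comb.
Variable p : rec.
Variable D : nat.
Variable w : nat.

Local Notation mem x t := (memb p D x t w).
Local Notation nb x t := (newb p D x t w).

Lemma memb_lt x t : mem x t -> x < t.
Proof. by case/andP. Qed.

Lemma memb_mono x t t' : t <= t' -> mem x t -> mem x t'.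
Proof.
move=> tt' /andP [xt]; rewrite /memb (leq_trans xt tt') /=.
case E: (evalF t p _) => [v|] // _.
by rewrite (mono tt' E).
Qed.

Lemma cnt_split t : cnt p D t w = cnt p D t.-1 w + \sum_(0 <= x < t) nb x t.
Proof.
case: t => [|t]; first by rewrite /cnt !big_geq.
rewrite /cnt /=.
have -> : \sum_(0 <= i < t) memb p D i t w = \sum_(0 <= i < t.+1) memb p D i t w.
  by rewrite big_nat_recr //= /memb ltnn /= addn0.
rewrite -big_split /=.
apply: eq_bigr => x _; rewrite /newb /=.
case E: (memb p D x t w); last by rewrite andbT.
by rewrite (memb_mono (leqnSn t) E).
Qed.

Lemma cnt_mono t t' : t <= t' -> cnt p D t w <= cnt p D t' w.
Proof.
move=> tt'; rewrite /cnt; apply: leq_trans (sum_le_bound _ tt').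
apply: leq_sum => x _; case E: (memb p D x t w) => //.
by rewrite (memb_mono tt' E).
Qed.

Lemma sum_nb_step x t : nb x t -> \sum_(0 <= i < x) nb i t < \sum_(0 <= i < x.+1) nb i t.
Proof. by move=> h; rewrite big_nat_recr //= h addn1. Qed.

Lemma rank_lt x t : nb x t -> rank p D x t w < cnt p D t w.
Proof.
move=> h; rewrite /rank (cnt_split t) ltn_add2l.
apply: (leq_trans (sum_nb_step h)); apply: sum_le_bound.
by move: h => /andP [/memb_lt].
Qed.

Lemma rank_lt2 x t x' t' : t < t' -> nb x t -> nb x' t' -> rank p D x t w < rank p D x' t' w.
Proof.
move=> tt' h h'; apply: (leq_trans (rank_lt h)); rewrite /rank.
apply: leq_trans (leq_addr _ _); apply: cnt_mono.
by case: t' tt' {h'}.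
Qed.

Lemma rank_lt3 x x' t : x < x' -> nb x t -> rank p D x t w < rank p D x' t w.
Proof.
move=> xx' h; rewrite /rank ltn_add2l.
by apply: (leq_trans (sum_nb_step h)); apply: sum_le_bound.
Qed.

Lemma rank_inj x t x' t' : nb x t -> nb x' t' -> rank p D x t w = rank p D x' t' w -> t = t' /\ x = x'.
Proof.
move=> h h' E.
case: (ltngtP t t') => [lt|lt|et].
- by have := rank_lt2 lt h h'; rewrite E ltnn.
- by have := rank_lt2 lt h' h; rewrite E ltnn.
subst t'; split => //.
case: (ltngtP x x') => [lt|lt|//].
- by have := rank_lt3 lt h; rewrite E ltnn.
- by have := rank_lt3 lt h'; rewrite E ltnn.
Qed.

End Comb.

Lemma ex_min_prop (Q : nat -> Prop) : (exists n, Q n) -> exists n, Q n /\ forall m, Q m -> n <= m.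
Proof.
move=> [n Hn]; elim: n {-2}n (leqnn n) Hn => [|N IH] n hn Qn.
  by exists n; split => // m _; move: hn; rewrite leqn0 => /eqP ->.
case: (Classical_Prop.classic (exists m, m < n /\ Q m)) => [[m [mn Qm]]|H].
  by apply: (IH m) => //; lia.
exists n; split => // m Qm; rewrite leqNgt; apply/negP => mn.
by apply: H; exists m.
Qed.

Section Ext.
Variable p : rec.
Variable D : nat.
Variables w w0 : nat.
Hypothesis Hy : ycode w = ycode w0.
Hypothesis Hn : nfun D w = nfun D w0.

Lemma memb_w x t : memb p D x t w = memb p D x t w0.
Proof. by rewrite /memb Hy Hn. Qed.
Lemma newb_w x t : newb p D x t w = newb p D x t w0.
Proof. by rewrite /newb !memb_w. Qed.
Lemma cnt_w t : cnt p D t w = cnt p D t w0.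
Proof. by rewrite /cnt; apply: eq_bigr => x _; rewrite memb_w. Qed.
Lemma rank_w x t : rank p D x t w = rank p D x t w0.
Proof. by rewrite /rank cnt_w; congr (_ + _); apply: eq_bigr => i _; rewrite newb_w. Qed.
End Ext.

Theorem theorem5 (U : rec) (HU : optimal U) (B : str -> str -> nat) :
  upper_semicomputable B ->
  (exists c, forall x y, B x y <= size x + c) ->
  (exists d, forall (y : str) (n : nat) (xs : seq str),
      uniq xs -> all (fun x => B x y <= n) xs -> size xs <= d * 2 ^ n) ->
  (exists e, forall x y, B (spair x y) y <= B x y + e) ->
  (forall f : rec, exists cf, forall x y z, runs f x z -> B z y <= B x y + cf) ->
  exists c', forall x y, exists k,
    CT_is U x y k /\ B x y <= k + c' /\ k <= B x y + c'.
Proof.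
move=> [q Hq] [c Hc] [d Hd] [e He] Hf.
have [cU HcU] := Hf U.
set D := d.
have [qt Hqt] := ctestf q D.
have [qo Hqo] := cgoodx q D.
set T := RComp qo [:: RMu qt; RProj 0].
have [cT HcT] := HU T.
exists (c + e + cU + D + cT) => x y.
have up : forall z, runs U (spair z y) x -> B x y <= size z + (c + e + cU).
  move=> z Hz; have h1 := HcU _ y _ Hz; have h2 := He z y; have h3 := Hc z y; lia.
set n := B x y.
set X := code x.
have hard : exists z, runs T (spair z y) x /\ size z = n + D.
  have [v Hv] : exists v, eval q [:: X; code y; n] v by apply/Hq.
  have [t0 Ht0] := complete Hv.
  set w0 := code (spair (nseq (n + D) false) y).
  have yw0 : ycode w0 = code y by rewrite ycode_spair.
  have nw0 : nfun D w0 = n by rewrite /nfun Lfun_spair size_nseq addnK.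
  have memX : exists t, memb q D X t w0.
    exists (maxn t0 X.+1); rewrite /memb leq_max ltnSn orbT /= yw0 nw0.
    by rewrite (mono (leq_maxl _ _) Ht0).
  case: (ex_minnP memX) => st Hst Hmin.
  have st0 : 0 < st by move: Hst => /memb_lt; case: st {Hmin}.
  have nbX : newb q D X st w0.
    rewrite /newb Hst /=; apply/negP => h; have := Hmin _ h.
    move: st0; clear; lia.
  set r := rank q D X st w0.
  have rlt : r < d * 2 ^ n.
    apply: (leq_trans (rank_lt nbX)).
    rewrite /cnt sum_count -size_filter.
    set l := filter _ _.
    have := Hd y n (map dc l); rewrite size_map; apply.
      rewrite map_inj_uniq; last exact: (can_inj code_dc).
      by apply: filter_uniq; exact: iota_uniq.
    apply/allP => s /mapP [x' x'in ->]; move: x'in; rewrite mem_filter => /andP [hm _].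
    move: hm => /andP [_]; rewrite yw0 nw0.
    case E: (evalF _ _ _) => [v'|] // _.
    have := sound E => Hev; apply/Hq; exists v'; by rewrite code_dc.
  have rlt2 : r < 2 ^ (n + D).
    apply: (leq_trans rlt); rewrite expnD mulnC leq_mul2l; apply/orP; right.
    exact: ltnW (ltn_expl _ (ltnSn 1)).
  set cz := (2 ^ (n + D)).-1 + r.
  set z := dc cz.
  have pos : 0 < 2 ^ (n + D) by rewrite expn_gt0.
  have sz : size z = n + D.
    apply: size_from_code; rewrite /z code_dc /cz ?expnS; move: pos rlt2; set P2 := 2 ^ (n + D); lia.
  exists z; split => //.
  set w := code (spair z y).
  have yw : ycode w = ycode w0 by rewrite /w ycode_spair yw0.
  have nw : nfun D w = nfun D w0 by rewrite /w nw0 /nfun Lfun_spair sz addnK.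
  have iw : ifun w = r.
    rewrite /ifun /w zcode_spair Lfun_spair sz /z code_dc /cz; lia.
  have gst : goodx q D st w < st.
    have : has (fun x => newb q D x st w && (rank q D x st w == ifun w)) (iota 0 st).
      2: by rewrite has_find size_iota.
    apply/hasP; exists X.
      by rewrite mem_iota add0n (memb_lt Hst).
    by rewrite (newb_w q yw nw) nbX (rank_w q yw nw) iw eqxx.
  case: (ex_minnP (ex_intro (fun t => goodx q D t w < t) st gst)) => ts Hts Htmin.
  have hasP' : has (fun x => newb q D x ts w && (rank q D x ts w == ifun w)) (iota 0 ts).
    by rewrite has_find size_iota.
  have := nth_find 0 hasP'; rewrite -/(goodx q D ts w) nth_iota // add0n.
  rewrite (newb_w q yw nw) (rank_w q yw nw) iw => /andP [nb' /eqP rk'].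
  have [ets egx] := rank_inj nb' nbX rk'.
  rewrite /runs -/w -/X -egx.
  apply: (@evComp _ _ _ [:: ts; w]).
    constructor; last by constructor; [exact: (evProj 0 [:: w]) | constructor].
    constructor.
      by have := Hqt [:: ts; w] erefl; rewrite /testf /A /= Hts.
    move=> m mts; exists 1; split => //.
    have := Hqt [:: m; w] erefl; rewrite /testf /A /=.
    case: ifP => // h; by have := Htmin _ h; rewrite leqNgt mts.
  exact: (Hqo [:: ts; w] erefl).
have [z [Hz sz]] := hard.
have [z' [Hz' sz']] := HcT _ _ _ Hz.
have [k [[z0 [Hz0 sz0]] kmin]] := @ex_min_prop (fun k => exists z, runs U (spair z y) x /\ size z = k)
   (ex_intro _ (size z') (ex_intro _ z' (conj Hz' erefl))).
exists k; split.
  split; first by exists z0.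
  by move=> zz Hzz; apply: kmin; exists zz.
split.
  have := up z0 Hz0; rewrite sz0; lia.
have := kmin (size z') (ex_intro _ z' (conj Hz' erefl)); rewrite sz in sz'; lia.
Qed.
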